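(* Let $\pi$ be a uniformly random permutation of $\{1,\dots,n\}$ and $\mathbf{s}=\sqrt{12/(n^2-1)}\,\big(\pi(1)-\tfrac{n+1}2,\dots,\pi(n)-\tfrac{n+1}2\big)^\top$, and let $\boldsymbol{\Sigma}=\frac{n}{n-1}\big(\mathbf{I}_n-\frac1n\mathbf{1}_n\mathbf{1}_n^\top\big)$. Then for all non-random symmetric $n\times n$ matrices $\mathbf{A},\mathbf{B}$, $$\mathbb{E}\,\mathbf{s}^\top\mathbf{A}\mathbf{s}=\operatorname{tr}(\boldsymbol{\Sigma}\mathbf{A}),$$ $$\operatorname{cov}(\mathbf{s}^\top\mathbf{A}\mathbf{s},\mathbf{s}^\top\mathbf{B}\mathbf{s})=2\operatorname{tr}(\mathbf{A}\mathbf{B})-\frac65\operatorname{tr}(\mathbf{A}\circ\mathbf{B})-\frac{4}{5n}\operatorname{tr}(\mathbf{A})\operatorname{tr}(\mathbf{B})+O(1)\|\mathbf{A}\|\|\mathbf{B}\|,$$ where $O(1)$ denotes a quantity bounded in absolute value by a constant not depending on $n,\mathbf{A},\mathbf{B}$.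
   Context: $\circ$ denotes the Hadamard (entrywise) product, $\|\cdot\|$ the spectral norm, and $\mathbf{1}_n$ the all-ones vector. *)

(* Defs.v *)
From HB Require Import structures.
From mathcomp Require Import all_boot all_order all_algebra all_fingroup.
From mathcomp Require Import all_classical all_reals.
Set Implicit Arguments. Unset Strict Implicit. Unset Printing Implicit Defensive.
Import Order.TTheory GRing.Theory Num.Theory.
Local Open Scope ring_scope.

Section Defs.
Variable R : realType.

Definition Eperm (n : nat) (f : 'S_n -> R) : R :=
  (n`!%:R)^-1 * \sum_(p : 'S_n) f p.

Definition Covperm (n : nat) (f g : 'S_n -> R) : R :=
  Eperm (fun p => f p * g p) - Eperm f * Eperm g.

(* The vector s: permutation p of 'I_n represents pi(i+1) = (p i) + 1. *)
Definition svec (n : nat) (p : 'S_n) : 'cV[R]_n :=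
  \col_(i < n) (Num.sqrt (12 / (n%:R ^+ 2 - 1)) *
                ((p i)%:R + 1 - (n%:R + 1) / 2)).

Definition qform (n : nat) (A : 'M[R]_n) (x : 'cV[R]_n) : R :=
  ((x^T *m A *m x) 0 0).

Definition Sigma (n : nat) : 'M[R]_n :=
  (n%:R / (n%:R - 1)) *: (1%:M - n%:R^-1 *: const_mx 1).

Definition hadamard (m n : nat) (A B : 'M[R]_(m, n)) : 'M[R]_(m, n) :=
  \matrix_(i, j) (A i j * B i j).

Definition vnorm2 (n : nat) (x : 'cV[R]_n) : R :=
  Num.sqrt (\sum_i (x i 0) ^+ 2).

Definition specnorm (m n : nat) (A : 'M[R]_(m, n)) : R :=
  sup [set vnorm2 (A *m x) | x in [set x : 'cV[R]_n | vnorm2 x <= 1]].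

End Defs.

Arguments Eperm {R n} f.
Arguments Covperm {R n} f g.
Arguments svec {R n} p.
Arguments qform {R n} A x.
Arguments hadamard {R m n} A B.
Arguments vnorm2 {R n} x.
Arguments specnorm {R m n} A.
Arguments Sigma R n : clear implicits.

(* Main.v *)
Require Import Defs.
From HB Require Import structures.
From mathcomp Require Import all_boot all_order all_algebra all_fingroup.
From mathcomp Require Import all_classical all_reals.
From mathcomp Require Import ring lra.
Import Order.TTheory GRing.Theory Num.Theory.
Local Open Scope ring_scope.
Set Implicit Arguments. Unset Strict Implicit. Unset Printing Implicit Defensive.
Lemma Eperm_const {R : realType} n (c : R) : Eperm (fun _ : 'S_n => c) = c.
Proof.
rewrite /Eperm sumr_const card_Sn -[c *+ _]mulr_natr mulrC mulfK //.
by rewrite pnatr_eq0 -lt0n fact_gt0.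
Qed.
Lemma EpermD {R : realType} n (f g : 'S_n -> R) :
  Eperm (fun p => f p + g p) = Eperm f + Eperm g.
Proof. by rewrite /Eperm big_split mulrDr. Qed.
Lemma EpermZ {R : realType} n (c : R) (f : 'S_n -> R) :
  Eperm (fun p => c * f p) = c * Eperm f.
Proof. by rewrite /Eperm -mulr_sumr mulrCA. Qed.
Lemma EpermN {R : realType} n (f : 'S_n -> R) :
  Eperm (fun p => - f p) = - Eperm f.
Proof. by rewrite /Eperm sumrN mulrN. Qed.
Lemma Eperm_ext {R : realType} n (f g : 'S_n -> R) :
  (forall p, f p = g p) -> Eperm f = Eperm g.
Proof. by move=> h; rewrite /Eperm; congr (_ * _); apply: eq_bigr. Qed.
Lemma Eperm_sum {R : realType} n (I : finType) (F : I -> 'S_n -> R) :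
  Eperm (fun p => \sum_i F i p) = \sum_i Eperm (F i).
Proof. by rewrite /Eperm exchange_big /= mulr_sumr. Qed.
Lemma Eperm_reindex {R : realType} n (q : 'S_n) (f : 'S_n -> R) :
  Eperm (fun p => f (q * p)%g) = Eperm f.
Proof.
by rewrite /Eperm [in RHS](reindex_inj (mulgI q)).
Qed.
Lemma sum_perm {R : realType} n (p : 'S_n) (F : 'I_n -> R) :
  \sum_i F (p i) = \sum_i F i.
Proof. by rewrite [RHS](reindex_inj (@perm_inj _ p)). Qed.
Lemma S1 {R : realType} (m : nat) (h : R) :
  \sum_(i < m) (i%:R + h) = m%:R * (m%:R - 1) / 2 + m%:R * h.
Proof.
elim: m => [|m IH]; first by rewrite big_ord0 !mul0r add0r.
rewrite big_ord_recr /= IH -natr1 /=. by by field.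
Qed.
Lemma S2 {R : realType} (m : nat) (h : R) :
  \sum_(i < m) (i%:R + h)^+2 = (m%:R - 1) * m%:R * (2 * m%:R - 1) / 6
     + h * m%:R * (m%:R - 1) + m%:R * h^+2.
Proof.
elim: m => [|m IH]; first by rewrite big_ord0; by field.
rewrite big_ord_recr /= IH -natr1 /=. by field.
Qed.
Lemma S4 {R : realType} (m : nat) (h : R) :
  \sum_(i < m) (i%:R + h)^+4 =
    m%:R * (m%:R - 1) * (2 * m%:R - 1) * (3 * m%:R^+2 - 3 * m%:R - 1) / 30
    + 4 * h * (m%:R * (m%:R - 1) / 2)^+2
    + 6 * h^+2 * ((m%:R - 1) * m%:R * (2 * m%:R - 1) / 6)
    + 4 * h^+3 * (m%:R * (m%:R - 1) / 2) + m%:R * h^+4.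
Proof.
elim: m => [|m IH]; first by rewrite big_ord0; by field.
rewrite big_ord_recr /= IH -natr1 /=. by field.
Qed.
Definition xv {R : realType} {n} (p : 'S_n) (i : 'I_n) : R := svec p i 0.
Definition cval {R : realType} n (a : nat) : R := a%:R + 1 - (n%:R + 1)/2.
Definition sig {R : realType} n : R := Num.sqrt (12 / (n%:R ^+ 2 - 1)).
Lemma xvE {R : realType} n (p : 'S_n) i : xv p i = sig n * cval n (p i) :> R.
Proof. by rewrite /xv /svec mxE. Qed.
Lemma xv_mul {R : realType} n (q p : 'S_n) i : xv (q * p)%g i = xv p (q i) :> R.
Proof. by rewrite !xvE permM. Qed.
Lemma sig2 {R : realType} n : (2 <= n)%N -> sig n ^+ 2 = 12 / (n%:R ^+ 2 - 1) :> R.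
Proof.
move=> n2; rewrite /sig sqr_sqrtr // divr_ge0 // subr_ge0.
have : (2%:R : R) <= n%:R by rewrite ler_nat.
move=> h; nra.
Qed.
Lemma n21_neq0 {R : realType} n : (2 <= n)%N -> (n%:R ^+ 2 - 1 : R) != 0.
Proof.
move=> n2; have : (2%:R : R) <= n%:R by rewrite ler_nat.
move=> h; apply/eqP => e; nra.
Qed.
Lemma sum_cval1 {R : realType} n : \sum_(a < n) cval n a = 0 :> R.
Proof.
rewrite /cval; under eq_bigr do rewrite -addrA.
rewrite S1; by field.
Qed.
Lemma sum_cval2 {R : realType} n :
  \sum_(a < n) cval n a ^+ 2 = n%:R * (n%:R ^+ 2 - 1) / 12 :> R.
Proof.
rewrite /cval; under eq_bigr do rewrite -addrA.
rewrite S2; by field.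
Qed.
Lemma sum_cval4 {R : realType} n :
  \sum_(a < n) cval n a ^+ 4 = n%:R * (n%:R ^+ 2 - 1) * (3 * n%:R ^+ 2 - 7) / 240 :> R.
Proof.
rewrite /cval; under eq_bigr do rewrite -addrA.
rewrite S4; by field.
Qed.
Definition M4 {R : realType} n : R := 3 * (3 * n%:R ^+ 2 - 7) / (5 * (n%:R ^+ 2 - 1)).
Lemma sum_xv1 {R : realType} n (p : 'S_n) : \sum_i xv p i = 0 :> R.
Proof.
under eq_bigr do rewrite xvE.
by rewrite -mulr_sumr (sum_perm p (fun a => cval n a)) sum_cval1 mulr0.
Qed.
Lemma sum_xv2 {R : realType} n (p : 'S_n) : (2 <= n)%N ->
  \sum_i xv p i ^+ 2 = n%:R :> R.
Proof.
move=> n2; under eq_bigr do rewrite xvE exprMn.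
rewrite -mulr_sumr (sum_perm p (fun a => cval n a ^+ 2)) sum_cval2 sig2 //.
by field; rewrite n21_neq0.
Qed.
Lemma sum_xv4 {R : realType} n (p : 'S_n) : (2 <= n)%N ->
  \sum_i xv p i ^+ 4 = n%:R * M4 n :> R.
Proof.
move=> n2; under eq_bigr do rewrite xvE exprMn.
rewrite -mulr_sumr (sum_perm p (fun a => cval n a ^+ 4)) sum_cval4.
rewrite (_ : 4 = 2 * 2)%N // exprM sig2 // /M4.
by field; rewrite n21_neq0.
Qed.
From mathcomp Require Import zify.
Definition E2 {R : realType} {n} (i j : 'I_n) : R := Eperm (fun p => xv p i * xv p j).
Definition E4 {R : realType} {n} (i j k l : 'I_n) : R :=
  Eperm (fun p => xv p i * xv p j * xv p k * xv p l).
Lemma E2_inv {R : realType} n (q : 'S_n) i j : E2 (q i) (q j) = E2 i j :> R.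
Proof.
rewrite /E2 -(Eperm_reindex q (fun p => xv p i * xv p j)).
by apply: Eperm_ext => p; rewrite !xv_mul.
Qed.
Lemma E4_inv {R : realType} n (q : 'S_n) i j k l :
  E4 (q i) (q j) (q k) (q l) = E4 i j k l :> R.
Proof.
rewrite /E4 -(Eperm_reindex q (fun p => xv p i * xv p j * xv p k * xv p l)).
by apply: Eperm_ext => p; rewrite !xv_mul.
Qed.
Lemma E4_12 {R : realType} n (i j k l : 'I_n) : E4 i j k l = E4 j i k l :> R.
Proof. by apply: Eperm_ext => p; ring. Qed.
Lemma E4_23 {R : realType} n (i j k l : 'I_n) : E4 i j k l = E4 i k j l :> R.
Proof. by apply: Eperm_ext => p; ring. Qed.
Lemma E4_34 {R : realType} n (i j k l : 'I_n) : E4 i j k l = E4 i j l k :> R.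
Proof. by apply: Eperm_ext => p; ring. Qed.
Lemma E2C {R : realType} n (i j : 'I_n) : E2 i j = E2 j i :> R.
Proof. by apply: Eperm_ext => p; ring. Qed.

Lemma E2_sum_l {R : realType} n (i : 'I_n) : \sum_l E2 i l = 0 :> R.
Proof.
rewrite /E2 -Eperm_sum -[RHS](Eperm_const n 0); apply: Eperm_ext => p /=.
by rewrite -mulr_sumr sum_xv1 mulr0.
Qed.
Lemma E2_sum_ii {R : realType} n : (2 <= n)%N -> \sum_(i < n) E2 i i = n%:R :> R.
Proof.
move=> n2; rewrite /E2 -Eperm_sum -[RHS](Eperm_const n n%:R); apply: Eperm_ext => p /=.
by rewrite -(sum_xv2 p n2); apply: eq_bigr => i _; rewrite expr2.
Qed.
Lemma E4_sum_l {R : realType} n (i j k : 'I_n) : \sum_l E4 i j k l = 0 :> R.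
Proof.
rewrite /E4 -Eperm_sum -[RHS](Eperm_const n 0); apply: Eperm_ext => p /=.
by rewrite -mulr_sumr sum_xv1 mulr0.
Qed.
Lemma E4_sum_ll {R : realType} n (i : 'I_n) : (2 <= n)%N ->
  \sum_l E4 i i l l = n%:R * E2 i i :> R.
Proof.
move=> n2; rewrite /E4 /E2 -Eperm_sum -EpermZ; apply: Eperm_ext => p /=.
rewrite -(sum_xv2 p n2) mulr_suml; apply: eq_bigr => l _; ring.
Qed.
Lemma E4_sum_iiii {R : realType} n : (2 <= n)%N ->
  \sum_(i < n) E4 i i i i = n%:R * M4 n :> R.
Proof.
move=> n2; rewrite /E4 -Eperm_sum -[RHS](Eperm_const n (n%:R * M4 n)); apply: Eperm_ext => p /=.
by rewrite -(sum_xv4 p n2); apply: eq_bigr => i _; ring.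
Qed.

Lemma sum1 {R : realType} n (F : 'I_n -> R) i :
  \sum_l F l = F i + \sum_(l | l != i) F l.
Proof. by rewrite (bigD1 i). Qed.
Lemma sum2 {R : realType} n (F : 'I_n -> R) i j : i != j ->
  \sum_l F l = F i + F j + \sum_(l | (l != i) && (l != j)) F l.
Proof.
move=> ij; rewrite (bigD1 i) // (bigD1 j) 1?eq_sym //= addrA.
by congr (_ + _); apply: eq_bigl => l; rewrite andbC.
Qed.
Lemma sum3 {R : realType} n (F : 'I_n -> R) i j k : i != j -> i != k -> j != k ->
  \sum_l F l = F i + F j + F k + \sum_(l | [&& l != i, l != j & l != k]) F l.
Proof.
move=> ij ik jk; rewrite (sum2 F ij) (bigD1 k) /=; last by rewrite eq_sym ik eq_sym jk.
rewrite !addrA; congr (_ + _); apply: eq_bigl => l; by case: (l != i); case: (l != j); case: (l != k).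
Qed.
Lemma sum_const_on {R : realType} n (P : pred 'I_n) (F : 'I_n -> R) c :
  (forall l, P l -> F l = c) -> \sum_(l | P l) F l = c * \sum_(l | P l) 1.
Proof. by move=> h; rewrite mulr_sumr; apply: eq_bigr => l /h ->; rewrite mulr1. Qed.
Lemma sum_ones {R : realType} n : \sum_(l < n) (1 : R) = n%:R.
Proof. by rewrite sumr_const card_ord. Qed.
Lemma card1 {R : realType} n (i : 'I_n) : \sum_(l | l != i) (1 : R) = n%:R - 1.
Proof. have h := sum1 (fun _ => 1 : R) i; rewrite /= sum_ones in h; rewrite h; ring. Qed.
Lemma card2 {R : realType} n (i j : 'I_n) : i != j ->
  \sum_(l | (l != i) && (l != j)) (1 : R) = n%:R - 2.
Proof. move=> ij; have h := sum2 (fun _ => 1 : R) ij; rewrite /= sum_ones in h; rewrite h; ring. Qed.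
Lemma card3 {R : realType} n (i j k : 'I_n) : i != j -> i != k -> j != k ->
  \sum_(l | [&& l != i, l != j & l != k]) (1 : R) = n%:R - 3.
Proof.
move=> ij ik jk; have h := sum3 (fun _ => 1 : R) ij ik jk; rewrite /= sum_ones in h; rewrite h; ring.
Qed.
Lemma solve_lin {R : realType} (a x b : R) : a != 0 -> b + x * a = 0 -> x = - b / a.
Proof. by move=> a0 h; rewrite -[b](addrK (x * a)) h sub0r opprK mulfK. Qed.
Lemma nR_sub_neq0 {R : realType} n k : (k < n)%N -> (n%:R - k%:R : R) != 0.
Proof. by move=> kn; rewrite subr_eq0 eqr_nat; apply/negP => /eqP e; move: kn; rewrite e ltnn. Qed.
Lemma nR1 {R : realType} n : (2 <= n)%N -> (n%:R - 1 : R) != 0.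
Proof. by move=> h; have := nR_sub_neq0 (R:=R) h. Qed.
Lemma nR2 {R : realType} n : (3 <= n)%N -> (n%:R - 2 : R) != 0.
Proof. by move=> h; have := nR_sub_neq0 (R:=R) h. Qed.
Lemma nR3 {R : realType} n : (4 <= n)%N -> (n%:R - 3 : R) != 0.
Proof. by move=> h; have := nR_sub_neq0 (R:=R) h. Qed.
Lemma dist3 n (i j k : 'I_n) : i != j -> i != k -> j != k -> (3 <= n)%N.
Proof.
move=> ij ik jk; have:= ltn_ord i; have := ltn_ord j; have := ltn_ord k.
move: ij ik jk; rewrite -!(inj_eq val_inj) /=; lia.
Qed.
Lemma dist4 n (i j k l : 'I_n) : i != j -> i != k -> j != k ->
  l != i -> l != j -> l != k -> (4 <= n)%N.
Proof.
move=> ij ik jk li lj lk; have:= ltn_ord i; have := ltn_ord j; have := ltn_ord k; have := ltn_ord l.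
move: ij ik jk li lj lk; rewrite -!(inj_eq val_inj) /=; lia.
Qed.

Lemma E2ii {R : realType} n (i : 'I_n) : (2 <= n)%N -> E2 i i = 1 :> R.
Proof.
move=> n2; have c : forall j : 'I_n, E2 j j = E2 i i :> R.
  by move=> j; rewrite -(E2_inv (tperm i j) i i) tpermL.
have h := E2_sum_ii (R:=R) n2.
rewrite (eq_bigr (fun _ => E2 i i)) in h; last by move=> j _; exact: c.
rewrite sumr_const card_ord -[E2 i i *+ n]mulr_natr in h.
have n0 : (n%:R : R) != 0 by rewrite pnatr_eq0 -lt0n (leq_trans _ n2).
by apply: (mulIf n0); rewrite h mul1r.
Qed.
Lemma E2ij {R : realType} n (i j : 'I_n) : (2 <= n)%N -> i != j ->
  E2 i j = - 1 / (n%:R - 1) :> R.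
Proof.
move=> n2 ij; have h := E2_sum_l (R:=R) i.
rewrite (sum1 _ i) (sum_const_on (c := E2 i j)) ?card1 ?E2ii // in h; last first.
  by move=> l li; rewrite -(E2_inv (tperm j l) i j) tpermL tpermD // eq_sym.
by apply: solve_lin h; apply: nR1 n2.
Qed.

Definition M31 {R : realType} n : R := - M4 n / (n%:R - 1).
Definition M22 {R : realType} n : R := - (1 * M4 n - n%:R) / (n%:R - 1).
Definition M211 {R : realType} n : R := - (M31 n + M22 n) / (n%:R - 2).
Definition M1111 {R : realType} n : R := - (M211 n + M211 n + M211 n) / (n%:R - 3).

Lemma E4iiii {R : realType} n (i : 'I_n) : (2 <= n)%N -> E4 i i i i = M4 n :> R.
Proof.
move=> n2; have c : forall j : 'I_n, E4 j j j j = E4 i i i i :> R.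
  by move=> j; rewrite -(E4_inv (tperm i j) i i i i) tpermL.
have h := E4_sum_iiii (R:=R) n2.
rewrite (eq_bigr (fun _ => E4 i i i i)) in h; last by move=> j _; exact: c.
rewrite sumr_const card_ord -[E4 i i i i *+ n]mulr_natr mulrC in h.
have n0 : (n%:R : R) != 0 by rewrite pnatr_eq0 -lt0n (leq_trans _ n2).
exact: (mulfI n0).
Qed.
Lemma E4iiij {R : realType} n (i j : 'I_n) : (2 <= n)%N -> i != j ->
  E4 i i i j = M31 n :> R.
Proof.
move=> n2 ij; have h := E4_sum_l (R:=R) i i i.
rewrite (sum1 _ i) (sum_const_on (c := E4 i i i j)) ?card1 ?E4iiii // in h; last first.
  by move=> l li; rewrite -(E4_inv (tperm j l) i i i j) tpermL tpermD // eq_sym.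
by apply: solve_lin h; apply: nR1 n2.
Qed.
Lemma E4iijj {R : realType} n (i j : 'I_n) : (2 <= n)%N -> i != j ->
  E4 i i j j = M22 n :> R.
Proof.
move=> n2 ij; have h := E4_sum_ll (R:=R) i n2.
rewrite (sum1 _ i) (sum_const_on (c := E4 i i j j)) ?card1 ?E4iiii ?E2ii // in h; last first.
  by move=> l li; rewrite -(E4_inv (tperm j l) i i j j) tpermL tpermD // eq_sym.
move/eqP: h; rewrite -subr_eq0 => /eqP h.
rewrite /M22; apply: solve_lin; first by apply: nR1 n2.
by rewrite -h; ring.
Qed.
Lemma E4iijk {R : realType} n (i j k : 'I_n) : (2 <= n)%N -> i != j -> i != k -> j != k ->
  E4 i i j k = M211 n :> R.
Proof.
move=> n2 ij ik jk; have h := E4_sum_l (R:=R) i i j.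
rewrite (sum2 _ ij) (sum_const_on (c := E4 i i j k)) ?card2 // in h; last first.
  move=> l /andP[li lj]; rewrite -(E4_inv (tperm k l) i i j k) tpermL !tpermD //.
  1,2: by rewrite eq_sym.
rewrite E4_34 E4iiij // E4iijj // in h.
by apply: solve_lin h; apply: nR2 (dist3 ij ik jk).
Qed.
Lemma E4ijkl {R : realType} n (i j k l : 'I_n) : (2 <= n)%N -> i != j -> i != k -> j != k ->
  l != i -> l != j -> l != k -> E4 i j k l = M1111 n :> R.
Proof.
move=> n2 ij ik jk li lj lk; have h := E4_sum_l (R:=R) i j k.
rewrite (sum3 _ ij ik jk) (sum_const_on (c := E4 i j k l)) ?card3 // in h; last first.
  move=> m /and3P[mi mj mk]; rewrite -(E4_inv (tperm l m) i j k l) tpermL !tpermD //.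
rewrite [E4 i j k i]E4_34 [E4 i j i k]E4_23 E4iijk // in h.
rewrite [E4 i j k j]E4_34 [E4 i j j k]E4_12 [E4 j i j k]E4_23 E4iijk // 1?eq_sym // in h.
rewrite [E4 i j k k]E4_23 [E4 i k j k]E4_12 [E4 k i j k]E4_34 [E4 k i k j]E4_23 E4iijk // 1?eq_sym // in h.
by apply: solve_lin h; apply: nR3 (dist4 ij ik jk li lj lk).
Qed.
Definition dd {R : realType} {n} (i j : 'I_n) : R := (i == j)%:R.
Definition u0 {R : realType} n : R := M1111 n.
Definition u2 {R : realType} n : R := M211 n - M1111 n.
Definition u22 {R : realType} n : R := M22 n - 2 * M211 n + M1111 n.
Definition u3 {R : realType} n : R := M31 n - 3 * M211 n + 2 * M1111 n.
Definition u4 {R : realType} n : R :=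
  M4 n - 6 * u2 n - 3 * u22 n - 4 * u3 n - u0 n.
Definition Fj {R : realType} {n} (i k l : 'I_n) : R :=
  u0 n + u2 n * (dd i k + dd i l + dd k l) + u3 n * (dd i k * dd k l).
Definition Fi {R : realType} {n} (j k l : 'I_n) : R :=
  u2 n * (dd j k + dd j l) + u3 n * (dd j k * dd k l).
Definition Fk {R : realType} {n} (i j l : 'I_n) : R :=
  u2 n * dd i j + u3 n * (dd i j * dd j l).
Definition Fl {R : realType} {n} (i j k : 'I_n) : R :=
  u3 n * (dd i j * dd j k).
Definition G1 {R : realType} {n} (i j k l : 'I_n) : R :=
  u22 n * (dd i j * dd k l + dd i k * dd j l + dd i l * dd j k)
  + u4 n * (dd i j * dd j k * dd k l).

Ltac kill_neq := repeat match goal with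
 | H : is_true (?a != ?b) |- context [?a == ?b] => rewrite (negbTE H)
 | H : is_true (?a != ?b) |- context [?b == ?a] => rewrite (eq_sym b a) (negbTE H)
end.
Ltac fin := rewrite /G1 /Fj /Fi /Fk /Fl /dd ?eqxx; kill_neq; rewrite /u4 /u3 /u22 /u2 /u0 /=; ring.

Lemma E4poly {R : realType} n (i j k l : 'I_n) : (2 <= n)%N ->
  E4 i j k l = G1 i j k l + Fj i k l + Fi j k l + Fk i j l + Fl i j k :> R.
Proof.
move=> n2.
case: (eqVneq i j) => [e|ij]; first subst j.
  case: (eqVneq i k) => [e|ik]; first subst k.
    case: (eqVneq i l) => [e|il]; first subst l.
      by rewrite E4iiii //; fin.
    by rewrite E4iiij //; fin.
  case: (eqVneq i l) => [e|il]; first subst l.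
    by rewrite E4_34 E4iiij //; fin.
  case: (eqVneq k l) => [e|kl]; first subst l.
    by rewrite E4iijj //; fin.
  by rewrite E4iijk //; fin.
case: (eqVneq i k) => [e|ik]; first subst k.
  case: (eqVneq i l) => [e|il]; first subst l.
    by rewrite E4_23 E4_34 E4iiij //; fin.
  case: (eqVneq j l) => [e|jl]; first subst l.
    by rewrite E4_23 E4iijj //; fin.
  by rewrite E4_23 E4iijk //; fin.
case: (eqVneq j k) => [e|jk]; first subst k.
  case: (eqVneq j l) => [e|jl]; first subst l.
    by rewrite E4_12 E4_23 E4_34 E4iiij 1?eq_sym //; fin.
  case: (eqVneq i l) => [e|il]; first subst l.
    by rewrite E4_34 E4_23 E4iijj //; fin.
  by rewrite E4_12 E4_23 E4iijk 1?eq_sym //; fin.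
case: (eqVneq i l) => [e|il]; first subst l.
  by rewrite E4_34 E4_23 E4iijk //; fin.
case: (eqVneq j l) => [e|jl]; first subst l.
  by rewrite E4_34 E4_12 E4_23 E4iijk 1?eq_sym //; fin.
case: (eqVneq k l) => [e|kl]; first subst l.
  by rewrite E4_23 E4_12 E4_34 E4_23 E4iijk 1?eq_sym //; fin.
by rewrite E4ijkl 1?eq_sym //; fin.
Qed.
Definition Q4 {R : realType} {n} (A B : 'M[R]_n) (F : 'I_n -> 'I_n -> 'I_n -> 'I_n -> R) : R :=
  \sum_i \sum_j \sum_k \sum_l A i j * B k l * F i j k l.
Lemma S4_add {R : realType} n (A B : 'M[R]_n) F G :
  Q4 A B (fun i j k l => F i j k l + G i j k l) = Q4 A B F + Q4 A B G.
Proof.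
rewrite /Q4 -big_split; apply: eq_bigr => i _; rewrite -big_split; apply: eq_bigr => j _.
rewrite -big_split; apply: eq_bigr => k _; rewrite -big_split; apply: eq_bigr => l _.
by rewrite mulrDr.
Qed.
Lemma S4_scale {R : realType} n (A B : 'M[R]_n) c F :
  Q4 A B (fun i j k l => c * F i j k l) = c * Q4 A B F.
Proof.
rewrite /Q4 mulr_sumr; apply: eq_bigr => i _; rewrite mulr_sumr; apply: eq_bigr => j _.
rewrite mulr_sumr; apply: eq_bigr => k _; rewrite mulr_sumr; apply: eq_bigr => l _.
by rewrite mulrCA.
Qed.
Lemma S4_ext {R : realType} n (A B : 'M[R]_n) F G :
  (forall i j k l, F i j k l = G i j k l) -> Q4 A B F = Q4 A B G.
Proof.
move=> h; rewrite /Q4; apply: eq_bigr => i _; apply: eq_bigr => j _.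
by apply: eq_bigr => k _; apply: eq_bigr => l _; rewrite h.
Qed.
Lemma S4_Zj {R : realType} n (A B : 'M[R]_n) (F : 'I_n -> 'I_n -> 'I_n -> R) :
  (forall i, \sum_j A i j = 0) -> Q4 A B (fun i j k l => F i k l) = 0.
Proof.
move=> hA; rewrite /Q4; apply: big1 => i _.
transitivity (\sum_j A i j * \sum_k \sum_l B k l * F i k l).
  apply: eq_bigr => j _; rewrite mulr_sumr; apply: eq_bigr => k _.
  by rewrite mulr_sumr; apply: eq_bigr => l _; rewrite mulrA.
by rewrite -mulr_suml hA mul0r.
Qed.
Lemma S4_Zi {R : realType} n (A B : 'M[R]_n) (F : 'I_n -> 'I_n -> 'I_n -> R) :
  (forall j, \sum_i A i j = 0) -> Q4 A B (fun i j k l => F j k l) = 0.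
Proof.
move=> hA; rewrite /Q4 exchange_big /=; apply: big1 => j _.
transitivity (\sum_i A i j * \sum_k \sum_l B k l * F j k l).
  apply: eq_bigr => i _; rewrite mulr_sumr; apply: eq_bigr => k _.
  by rewrite mulr_sumr; apply: eq_bigr => l _; rewrite mulrA.
by rewrite -mulr_suml hA mul0r.
Qed.
Lemma S4_Zl {R : realType} n (A B : 'M[R]_n) (F : 'I_n -> 'I_n -> 'I_n -> R) :
  (forall k, \sum_l B k l = 0) -> Q4 A B (fun i j k l => F i j k) = 0.
Proof.
move=> hB; rewrite /Q4; apply: big1 => i _; apply: big1 => j _; apply: big1 => k _.
transitivity ((\sum_l B k l) * (A i j * F i j k)); last by rewrite hB mul0r.
by rewrite mulr_suml; apply: eq_bigr => l _; ring.
Qed.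
Lemma S4_Zk {R : realType} n (A B : 'M[R]_n) (F : 'I_n -> 'I_n -> 'I_n -> R) :
  (forall l, \sum_k B k l = 0) -> Q4 A B (fun i j k l => F i j l) = 0.
Proof.
move=> hB; rewrite /Q4; apply: big1 => i _; apply: big1 => j _; rewrite exchange_big /=.
apply: big1 => l _.
transitivity ((\sum_k B k l) * (A i j * F i j l)); last by rewrite hB mul0r.
by rewrite mulr_suml; apply: eq_bigr => k _; ring.
Qed.
Lemma sum_dd {R : realType} n (i : 'I_n) (F : 'I_n -> R) : \sum_j dd i j * F j = F i.
Proof.
rewrite (bigD1 i) //= big1 ?addr0 /dd ?eqxx ?mul1r // => j ji.
by rewrite eq_sym (negbTE ji) mul0r.
Qed.
Lemma sum_dd' {R : realType} n (i : 'I_n) (F : 'I_n -> R) : \sum_j dd j i * F j = F i.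
Proof.
rewrite -(sum_dd i F); apply: eq_bigr => j _; by rewrite /dd eq_sym.
Qed.
Lemma Q4_T1 {R : realType} n (A B : 'M[R]_n) :
  Q4 A B (fun i j k l => dd i j * dd k l) = (\sum_i A i i) * (\sum_k B k k).
Proof.
rewrite /Q4; transitivity (\sum_i \sum_j A i j * dd i j * \sum_k B k k).
  apply: eq_bigr => i _; apply: eq_bigr => j _; rewrite mulr_sumr; apply: eq_bigr => k _.
  rewrite -(sum_dd k (fun l => A i j * dd i j * B k l)) /=; apply: eq_bigr => l _; ring.
rewrite mulr_suml; apply: eq_bigr => i _.
rewrite -(sum_dd i (fun j => A i j * \sum_k B k k)) /=; apply: eq_bigr => j _; ring.
Qed.
Lemma Q4_T2 {R : realType} n (A B : 'M[R]_n) :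
  Q4 A B (fun i j k l => dd i k * dd j l) = \sum_i \sum_j A i j * B i j.
Proof.
rewrite /Q4; transitivity (\sum_i \sum_j \sum_k A i j * B k j * dd i k).
  apply: eq_bigr => i _; apply: eq_bigr => j _; apply: eq_bigr => k _.
  rewrite -(sum_dd j (fun l => A i j * B k l * dd i k)) /=; apply: eq_bigr => l _; ring.
apply: eq_bigr => i _; apply: eq_bigr => j _.
rewrite -(sum_dd i (fun k => A i j * B k j)) /=; apply: eq_bigr => k _; ring.
Qed.
Lemma Q4_T3 {R : realType} n (A B : 'M[R]_n) : (forall i j, B i j = B j i) ->
  Q4 A B (fun i j k l => dd i l * dd j k) = \sum_i \sum_j A i j * B i j.
Proof.
move=> sB; rewrite /Q4; transitivity (\sum_i \sum_j \sum_k A i j * B k i * dd j k).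
  apply: eq_bigr => i _; apply: eq_bigr => j _; apply: eq_bigr => k _.
  rewrite -(sum_dd i (fun l => A i j * B k l * dd j k)) /=; apply: eq_bigr => l _; ring.
apply: eq_bigr => i _; apply: eq_bigr => j _.
rewrite [in RHS]sB -(sum_dd j (fun k => A i j * B k i)) /=; apply: eq_bigr => k _; ring.
Qed.
Lemma Q4_T4 {R : realType} n (A B : 'M[R]_n) :
  Q4 A B (fun i j k l => dd i j * dd j k * dd k l) = \sum_i A i i * B i i.
Proof.
rewrite /Q4; transitivity (\sum_i \sum_j \sum_k A i j * B k k * dd i j * dd j k).
  apply: eq_bigr => i _; apply: eq_bigr => j _; apply: eq_bigr => k _.
  rewrite -(sum_dd k (fun l => A i j * B k l * dd i j * dd j k)) /=; apply: eq_bigr => l _; ring.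
transitivity (\sum_i \sum_j A i j * B j j * dd i j).
  apply: eq_bigr => i _; apply: eq_bigr => j _.
  rewrite -(sum_dd j (fun k => A i j * B k k * dd i j)) /=; apply: eq_bigr => k _; ring.
apply: eq_bigr => i _.
rewrite -(sum_dd i (fun j => A i j * B j j)) /=; apply: eq_bigr => j _; ring.
Qed.

Lemma contraction {R : realType} n (A B : 'M[R]_n) : (2 <= n)%N ->
  (forall i, \sum_j A i j = 0) -> (forall j, \sum_i A i j = 0) ->
  (forall k, \sum_l B k l = 0) -> (forall l, \sum_k B k l = 0) ->
  (forall i j, B i j = B j i) ->
  Q4 A B (fun i j k l => E4 i j k l) =
  u22 n * ((\sum_i A i i) * (\sum_k B k k) + 2 * \sum_i \sum_j A i j * B i j)
  + u4 n * \sum_i A i i * B i i.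
Proof.
move=> n2 rA cA rB cB sB.
rewrite (@S4_ext R n A B _ (fun i j k l => G1 i j k l + Fj i k l + Fi j k l + Fk i j l + Fl i j k));
  last by move=> i j k l; apply: E4poly.
rewrite (@S4_add R n A B (fun i j k l => G1 i j k l + Fj i k l + Fi j k l + Fk i j l) (fun i j k l => Fl i j k)).
rewrite (@S4_add R n A B (fun i j k l => G1 i j k l + Fj i k l + Fi j k l) (fun i j k l => Fk i j l)).
rewrite (@S4_add R n A B (fun i j k l => G1 i j k l + Fj i k l) (fun i j k l => Fi j k l)).
rewrite (@S4_add R n A B (fun i j k l => G1 i j k l) (fun i j k l => Fj i k l)).
rewrite (@S4_Zl R n A B (fun i j k => Fl i j k) rB) (@S4_Zk R n A B (fun i j l => Fk i j l) cB).
rewrite (@S4_Zi R n A B (fun j k l => Fi j k l) cA) (@S4_Zj R n A B (fun i k l => Fj i k l) rA) !addr0.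
rewrite /G1 (@S4_add R n A B (fun i j k l => u22 n * (dd i j * dd k l + dd i k * dd j l + dd i l * dd j k))
   (fun i j k l => u4 n * (dd i j * dd j k * dd k l))).
rewrite (@S4_scale R n A B (u22 n) (fun i j k l => (dd i j * dd k l + dd i k * dd j l + dd i l * dd j k))).
rewrite (@S4_scale R n A B (u4 n) (fun i j k l => dd i j * dd j k * dd k l)).
rewrite (@S4_add R n A B (fun i j k l => dd i j * dd k l + dd i k * dd j l) (fun i j k l => dd i l * dd j k)).
rewrite (@S4_add R n A B (fun i j k l => dd i j * dd k l) (fun i j k l => dd i k * dd j l)).
rewrite Q4_T1 Q4_T2 Q4_T3 // Q4_T4; ring.
Qed.
Lemma qformE {R : realType} n (A : 'M[R]_n) (v : 'cV[R]_n) :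
  qform A v = \sum_i \sum_j v i 0 * A i j * v j 0.
Proof.
rewrite /qform mxE exchange_big /=; apply: eq_bigr => j _.
rewrite mxE mulr_suml; apply: eq_bigr => i _; by rewrite mxE.
Qed.
Lemma Eqform {R : realType} n (A : 'M[R]_n) :
  Eperm (fun p => qform A (svec p)) = \sum_i \sum_j A i j * E2 i j.
Proof.
rewrite (Eperm_ext (g := fun p => \sum_i \sum_j A i j * (xv p i * xv p j))); last first.
  move=> p; rewrite qformE; apply: eq_bigr => i _; apply: eq_bigr => j _; rewrite /xv; ring.
rewrite Eperm_sum; apply: eq_bigr => i _; rewrite Eperm_sum; apply: eq_bigr => j _.
by rewrite EpermZ.
Qed.
Lemma Eqform2 {R : realType} n (A B : 'M[R]_n) :
  Eperm (fun p => qform A (svec p) * qform B (svec p)) = Q4 A B (fun i j k l => E4 i j k l).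
Proof.
rewrite (Eperm_ext (g := fun p => \sum_i \sum_j \sum_k \sum_l A i j * B k l *
     (xv p i * xv p j * xv p k * xv p l))); last first.
  move=> p; rewrite !qformE mulr_suml; apply: eq_bigr => i _.
  rewrite mulr_suml; apply: eq_bigr => j _; rewrite mulr_sumr; apply: eq_bigr => k _.
  rewrite mulr_sumr; apply: eq_bigr => l _; rewrite /xv; ring.
rewrite /Q4 Eperm_sum; apply: eq_bigr => i _; rewrite Eperm_sum; apply: eq_bigr => j _.
rewrite Eperm_sum; apply: eq_bigr => k _; rewrite Eperm_sum; apply: eq_bigr => l _.
by rewrite EpermZ.
Qed.
Lemma sym_entry {R : realType} n (A : 'M[R]_n) : A^T = A -> forall i j, A i j = A j i.
Proof. by move=> sA i j; rewrite -{1}sA mxE. Qed.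
Lemma n_neq0 {R : realType} n : (2 <= n)%N -> (n%:R : R) != 0.
Proof. by move=> n2; rewrite pnatr_eq0 -lt0n (leq_trans _ n2). Qed.

Lemma part1 {R : realType} n (A : 'M[R]_n) : (2 <= n)%N -> A^T = A ->
  Eperm (fun p => qform A (svec p)) = \tr (Sigma R n *m A).
Proof.
move=> n2 sA; rewrite Eqform /mxtrace; apply: eq_bigr => i _; rewrite mxE.
apply: eq_bigr => j _; rewrite (sym_entry sA j i) mulrC; congr (_ * _).
rewrite /Sigma !mxE; have n0 := n_neq0 (R:=R) n2; have n1 := nR1 (R:=R) n2.
case: (eqVneq i j) => [e|ij].
  by subst j; rewrite E2ii //=; field; rewrite n0 n1.
by rewrite E2ij //=; field; rewrite n0 n1.
Qed.
Lemma sum_prod {R : realType} n (f g : 'I_n -> R) :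
  \sum_i \sum_j f i * g j = (\sum_i f i) * (\sum_j g j).
Proof. by rewrite mulr_suml; apply: eq_bigr => i _; rewrite mulr_sumr. Qed.
Lemma CS2 {R : realType} n (u v : 'I_n -> R) :
  (\sum_i u i * v i) ^+ 2 <= (\sum_i u i ^+ 2) * (\sum_i v i ^+ 2).
Proof.
have e : \sum_i \sum_j (u i * v j - u j * v i) ^+ 2 =
   2 * ((\sum_i u i ^+ 2) * (\sum_i v i ^+ 2) - (\sum_i u i * v i) ^+ 2).
  transitivity (\sum_i \sum_j (u i ^+ 2 * v j ^+ 2) + \sum_i \sum_j (v i ^+ 2 * u j ^+ 2)
      - 2 * \sum_i \sum_j ((u i * v i) * (u j * v j))).
    rewrite -big_split mulr_sumr -sumrB; apply: eq_bigr => i _.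
    rewrite -big_split mulr_sumr -sumrB; apply: eq_bigr => j _ /=; ring.
  rewrite (sum_prod (fun i => u i ^+ 2) (fun j => v j ^+ 2)).
  rewrite (sum_prod (fun i => v i ^+ 2) (fun j => u j ^+ 2)).
  rewrite (sum_prod (fun i => u i * v i) (fun j => u j * v j)) -expr2; ring.
have : 0 <= \sum_i \sum_j (u i * v j - u j * v i) ^+ 2.
  by apply: sumr_ge0 => i _; apply: sumr_ge0 => j _; apply: sqr_ge0.
rewrite e; nra.
Qed.
Lemma CS {R : realType} n (u v : 'I_n -> R) :
  `|\sum_i u i * v i| <= Num.sqrt (\sum_i u i ^+ 2) * Num.sqrt (\sum_i v i ^+ 2).
Proof.
rewrite -sqrtrM; last by apply: sumr_ge0 => i _; apply: sqr_ge0.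
by rewrite -sqrtr_sqr ler_wsqrtr // CS2.
Qed.
Lemma vn_ge0 {R : realType} n (x : 'cV[R]_n) : 0 <= vnorm2 x.
Proof. exact: sqrtr_ge0. Qed.
Lemma vn_sq {R : realType} n (x : 'cV[R]_n) : vnorm2 x ^+ 2 = \sum_i x i 0 ^+ 2.
Proof. by rewrite /vnorm2 sqr_sqrtr // sumr_ge0 // => i _; apply: sqr_ge0. Qed.
Lemma vn_scale {R : realType} n (c : R) (x : 'cV[R]_n) : vnorm2 (c *: x) = `|c| * vnorm2 x.
Proof.
rewrite /vnorm2 -sqrtr_sqr -sqrtrM ?sqr_ge0 //; congr Num.sqrt.
by rewrite mulr_sumr; apply: eq_bigr => i _; rewrite mxE exprMn.
Qed.
Lemma vn0 {R : realType} n (x : 'cV[R]_n) : vnorm2 x = 0 -> forall i, x i 0 = 0.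
Proof.
move=> h i; have : \sum_i x i 0 ^+ 2 = 0 by rewrite -vn_sq h expr0n.
move/eqP; rewrite psumr_eq0 => [/allP /(_ i) |j _]; last exact: sqr_ge0.
by rewrite mem_index_enum /= sqrf_eq0 => /(_ isT) /eqP.
Qed.
Lemma vn_mul_bound {R : realType} n (A : 'M[R]_n) (x : 'cV[R]_n) : vnorm2 x <= 1 ->
  vnorm2 (A *m x) <= Num.sqrt (\sum_i \sum_j A i j ^+ 2).
Proof.
move=> hx; have s1 : \sum_i x i 0 ^+ 2 <= 1.
  by rewrite -vn_sq; have := vn_ge0 x; nra.
rewrite /vnorm2 ler_wsqrtr // ler_sum // => i _.
rewrite mxE; apply: (le_trans (CS2 (fun j => A i j) (fun j => x j 0))) => /=.
have : 0 <= \sum_j A i j ^+ 2 by apply: sumr_ge0 => j _; apply: sqr_ge0.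
nra.
Qed.
Lemma vn_zero {R : realType} n : vnorm2 (0 : 'cV[R]_n) = 0.
Proof. by rewrite /vnorm2 big1 ?sqrtr0 // => i _; rewrite mxE expr0n. Qed.
Lemma specnorm_hassup {R : realType} n (A : 'M[R]_n) :
  has_sup [set vnorm2 (A *m x) | x in [set x : 'cV[R]_n | vnorm2 x <= 1]].
Proof.
split; first by exists (vnorm2 (A *m 0)); exists 0 => //=; rewrite vn_zero ler01.
exists (Num.sqrt (\sum_i \sum_j A i j ^+ 2)) => y [x hx <-].
exact: vn_mul_bound.
Qed.
Lemma specnorm_ub {R : realType} n (A : 'M[R]_n) (x : 'cV[R]_n) : vnorm2 x <= 1 ->
  vnorm2 (A *m x) <= specnorm A.
Proof. by move=> hx; apply: (sup_upper_bound (specnorm_hassup A)); exists x. Qed.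
Lemma specnorm_ge0 {R : realType} n (A : 'M[R]_n) : 0 <= specnorm A.
Proof.
by have := specnorm_ub A (x := 0); rewrite mulmx0 vn_zero; apply; rewrite ler01.
Qed.
Lemma specnorm_mul {R : realType} n (A : 'M[R]_n) (v : 'cV[R]_n) :
  vnorm2 (A *m v) <= specnorm A * vnorm2 v.
Proof.
have [h0|hn] := eqVneq (vnorm2 v) 0.
  have -> : v = 0 by apply/matrixP => i j; rewrite (ord1 j) mxE vn0.
  by rewrite mulmx0 !vn_zero mulr0.
have vp : 0 < vnorm2 v by rewrite lt_neqAle eq_sym hn vn_ge0.
have := specnorm_ub A (x := (vnorm2 v)^-1 *: v).
rewrite vn_scale -scalemxAr vn_scale ger0_norm ?invr_ge0 ?vn_ge0 // mulVf // lexx => /(_ isT).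
by rewrite ler_pdivrMl // mulrC.
Qed.
Lemma bil {R : realType} n (A : 'M[R]_n) (u v : 'cV[R]_n) :
  `|\sum_i u i 0 * (A *m v) i 0| <= vnorm2 u * (specnorm A * vnorm2 v).
Proof.
apply: (le_trans (CS (fun i => u i 0) (fun i => (A *m v) i 0))).
by apply: ler_wpM2l; [exact: vn_ge0 | exact: specnorm_mul].
Qed.
Definition ev (R : realType) {n} (k : 'I_n) : 'cV[R]_n := delta_mx k 0.
Definition onev (R : realType) n : 'cV[R]_n := const_mx 1.
Definition dgv {R : realType} n (A : 'M[R]_n) : 'cV[R]_n := \col_i A i i.
Definition rs {R : realType} n (A : 'M[R]_n) (i : 'I_n) : R := \sum_j A i j.
Definition tot {R : realType} n (A : 'M[R]_n) : R := \sum_i rs A i.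

Lemma mul_ev {R : realType} n (A : 'M[R]_n) i j : (A *m ev R j) i 0 = A i j.
Proof. by rewrite /ev -colE mxE. Qed.
Lemma mul_one {R : realType} n (A : 'M[R]_n) i : (A *m onev R n) i 0 = rs A i.
Proof. by rewrite mxE; apply: eq_bigr => j _; rewrite mxE mulr1. Qed.
Lemma ev_entry {R : realType} n (k i : 'I_n) : ev R k i 0 = (i == k)%:R.
Proof. by rewrite mxE andbT. Qed.
Lemma sum_ev {R : realType} n (k : 'I_n) (F : 'I_n -> R) : \sum_i ev R k i 0 * F i = F k.
Proof.
rewrite (bigD1 k) //= big1 ?addr0 ?ev_entry ?eqxx ?mul1r // => i ik.
by rewrite ev_entry (negbTE ik) mul0r.
Qed.
Lemma vn_ev {R : realType} n (k : 'I_n) : vnorm2 (ev R k) = 1.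
Proof.
rewrite /vnorm2 (eq_bigr (fun i => ev R k i 0 * 1)); first by rewrite sum_ev sqrtr1.
by move=> i _; rewrite ev_entry mulr1; case: (i == k); rewrite /= ?expr0n ?expr1n.
Qed.
Lemma vn_one {R : realType} n : vnorm2 (onev R n) = Num.sqrt n%:R.
Proof.
by rewrite /vnorm2 (eq_bigr (fun _ => 1)) ?sumr_const ?card_ord // => i _; rewrite mxE expr1n.
Qed.
Lemma sqrtn_sq {R : realType} n : Num.sqrt (n%:R : R) ^+ 2 = n%:R.
Proof. by rewrite sqr_sqrtr ?ler0n. Qed.

Lemma sum_cst {R : realType} n (c : R) : \sum_(i < n) c = n%:R * c.
Proof. by rewrite sumr_const card_ord mulr_natl. Qed.
Lemma bnd_entry {R : realType} n (A : 'M[R]_n) i j : `|A i j| <= specnorm A.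
Proof.
have := bil A (ev R i) (ev R j); rewrite sum_ev mul_ev !vn_ev mul1r mulr1 //.
Qed.
Lemma bnd_rs {R : realType} n (A : 'M[R]_n) i : `|rs A i| <= Num.sqrt n%:R * specnorm A.
Proof.
have := bil A (ev R i) (onev R n); rewrite sum_ev mul_one vn_ev vn_one mul1r mulrC //.
Qed.
Lemma bnd_tot {R : realType} n (A : 'M[R]_n) : `|tot A| <= n%:R * specnorm A.
Proof.
have := bil A (onev R n) (onev R n).
rewrite (eq_bigr (fun i => rs A i)); last by move=> i _; rewrite mul_one mxE mul1r.
rewrite vn_one => h; apply: (le_trans h); rewrite mulrCA -expr2 sqrtn_sq mulrC //.
Qed.
Lemma vn_mulone {R : realType} n (A : 'M[R]_n) : vnorm2 (A *m onev R n) <= specnorm A * Num.sqrt n%:R.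
Proof. by rewrite -vn_one specnorm_mul. Qed.
Lemma bnd_X {R : realType} n (A B : 'M[R]_n) :
  `|\sum_i \sum_j A i j * B i j| <= n%:R * (specnorm A * specnorm B).
Proof.
rewrite exchange_big /=; apply: (le_trans (ler_norm_sum _ _ _)).
rewrite -sum_cst; apply: ler_sum => j _.
rewrite (eq_bigr (fun i => (A *m ev R j) i 0 * (B *m ev R j) i 0)); last by move=> i _; rewrite !mul_ev.
apply: (le_trans (CS (fun i => (A *m ev R j) i 0) (fun i => (B *m ev R j) i 0))).
have h1 := specnorm_mul A (ev R j); have h2 := specnorm_mul B (ev R j).
rewrite vn_ev mulr1 in h1; rewrite vn_ev mulr1 in h2.
by apply: ler_pM; rewrite ?sqrtr_ge0.
Qed.
Lemma bnd_rsrs {R : realType} n (A B : 'M[R]_n) :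
  `|\sum_i rs A i * rs B i| <= n%:R * (specnorm A * specnorm B).
Proof.
rewrite (eq_bigr (fun i => (A *m onev R n) i 0 * (B *m onev R n) i 0)); last by move=> i _; rewrite !mul_one.
apply: (le_trans (CS (fun i => (A *m onev R n) i 0) (fun i => (B *m onev R n) i 0))).
have h1 := vn_mulone A; have h2 := vn_mulone B.
apply: (le_trans (ler_pM _ _ h1 h2)); rewrite ?sqrtr_ge0 //.
rewrite mulrACA -expr2 sqrtn_sq mulrC //.
Qed.
Lemma vn_dg {R : realType} n (A : 'M[R]_n) : vnorm2 (dgv A) <= Num.sqrt n%:R * specnorm A.
Proof.
rewrite /vnorm2 -(ger0_norm (specnorm_ge0 A)) -sqrtr_sqr -sqrtrM ?ler0n // ler_wsqrtr //.
rewrite -sum_cst ler_sum // => i _.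
rewrite mxE -(real_normK (num_real (A i i))) !expr2; apply: ler_pM; rewrite ?normr_ge0 ?bnd_entry //.
Qed.
Lemma bnd_drs {R : realType} n (A B : 'M[R]_n) :
  `|\sum_i A i i * rs B i| <= n%:R * (specnorm A * specnorm B).
Proof.
have := bil B (dgv A) (onev R n).
rewrite (eq_bigr (fun i => A i i * rs B i)); last by move=> i _; rewrite mul_one mxE.
move=> h; apply: (le_trans h); rewrite vn_one.
apply: (le_trans (ler_wpM2r _ (vn_dg A))); first by rewrite mulr_ge0 ?specnorm_ge0 ?sqrtr_ge0.
have -> : Num.sqrt (n%:R : R) * specnorm A * (specnorm B * Num.sqrt n%:R) = Num.sqrt n%:R ^+ 2 * (specnorm A * specnorm B) by ring.
by rewrite sqrtn_sq.
Qed.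
Lemma bnd_tr {R : realType} n (A : 'M[R]_n) : `|\sum_i A i i| <= n%:R * specnorm A.
Proof.
apply: (le_trans (ler_norm_sum _ _ _)).
by rewrite -sum_cst; apply: ler_sum => i _; apply: bnd_entry.
Qed.
Lemma bnd_H {R : realType} n (A B : 'M[R]_n) : `|\sum_i A i i * B i i| <= n%:R * (specnorm A * specnorm B).
Proof.
apply: (le_trans (ler_norm_sum _ _ _)).
rewrite -sum_cst; apply: ler_sum => i _.
by rewrite normrM ler_pM ?normr_ge0 ?bnd_entry.
Qed.
Definition Ap {R : realType} n (A : 'M[R]_n) : 'M[R]_n :=
  \matrix_(i, j) (A i j - rs A i / n%:R - rs A j / n%:R + tot A / n%:R ^+ 2).
Lemma Ap_rs {R : realType} n (A : 'M[R]_n) i : (n%:R : R) != 0 -> \sum_j Ap A i j = 0.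
Proof.
move=> n0; transitivity (\sum_j A i j - rs A i / n%:R * \sum_(j < n) 1 - \sum_j rs A j / n%:R
   + tot A / n%:R ^+ 2 * \sum_(j < n) 1).
  rewrite !mulr_sumr -sumrB -sumrB -big_split; apply: eq_bigr => j _ /=; rewrite mxE; ring.
rewrite sum_ones -mulr_suml -/(rs A i) -/(tot A); by field.
Qed.
Lemma Ap_sym {R : realType} n (A : 'M[R]_n) : (forall i j, A i j = A j i) ->
  forall i j, Ap A i j = Ap A j i.
Proof. by move=> sA i j; rewrite !mxE sA; ring. Qed.
Lemma Ap_cs {R : realType} n (A : 'M[R]_n) j : (n%:R : R) != 0 -> (forall i j, A i j = A j i) ->
  \sum_i Ap A i j = 0.
Proof. by move=> n0 sA; rewrite -[RHS](Ap_rs A j n0); apply: eq_bigr => i _; rewrite Ap_sym. Qed.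
Lemma qform_Ap {R : realType} n (A : 'M[R]_n) (x : 'cV[R]_n) :
  \sum_i x i 0 = 0 -> qform (Ap A) x = qform A x.
Proof.
move=> s0; rewrite !qformE.
transitivity (\sum_i (\sum_j x i 0 * A i j * x j 0 - x i 0 * (\sum_j rs A j / n%:R * x j 0)
    + (x i 0 * (- rs A i / n%:R + tot A / n%:R ^+ 2)) * \sum_j x j 0)).
  apply: eq_bigr => i _; rewrite !mulr_sumr -sumrB -big_split; apply: eq_bigr => j _ /=.
  rewrite mxE; ring.
rewrite s0; under eq_bigr do rewrite mulr0 addr0.
by rewrite sumrB -mulr_suml s0 mul0r subr0.
Qed.
Lemma tr_Ap {R : realType} n (A : 'M[R]_n) : (n%:R : R) != 0 ->
  \sum_i Ap A i i = \sum_i A i i - tot A / n%:R.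
Proof.
move=> n0; transitivity (\sum_i A i i - (2 / n%:R) * \sum_i rs A i + tot A / n%:R ^+ 2 * \sum_(i < n) 1).
  rewrite !mulr_sumr -sumrB -big_split; apply: eq_bigr => i _ /=; rewrite mxE; ring.
by rewrite sum_ones -/(tot A); field.
Qed.
Lemma cs_rs {R : realType} n (B : 'M[R]_n) j : (forall i j, B i j = B j i) -> \sum_i B i j = rs B j.
Proof. by move=> sB; apply: eq_bigr => i _; rewrite sB. Qed.
Lemma X_Ap {R : realType} n (A B : 'M[R]_n) : (n%:R : R) != 0 ->
  (forall i j, A i j = A j i) -> (forall i j, B i j = B j i) ->
  \sum_i \sum_j Ap A i j * Ap B i j =
  \sum_i \sum_j A i j * B i j - 2 / n%:R * \sum_i rs A i * rs B i + tot A * tot B / n%:R ^+ 2.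
Proof.
move=> n0 sA sB.
transitivity (\sum_i \sum_j Ap A i j * B i j).
  transitivity (\sum_i (\sum_j Ap A i j * B i j - (rs B i / n%:R - tot B / n%:R ^+ 2) * \sum_j Ap A i j
      - \sum_j Ap A i j * (rs B j / n%:R))).
    apply: eq_bigr => i _; rewrite mulr_sumr -!sumrB; apply: eq_bigr => j _.
    rewrite [Ap B i j]mxE; ring.
  under eq_bigr do rewrite Ap_rs // mulr0 subr0.
  rewrite sumrB [X in _ - X = _]exchange_big /=.
  rewrite [X in _ - X = _](eq_bigr (fun j => rs B j / n%:R * \sum_i Ap A i j)); last first.
    by move=> j _; rewrite mulr_sumr; apply: eq_bigr => i _; rewrite mulrC.
  rewrite [X in _ - X]big1 ?subr0 // => j _; by rewrite (@Ap_cs R n A j n0 sA) mulr0.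
transitivity (\sum_i (\sum_j A i j * B i j - rs A i / n%:R * rs B i - \sum_j rs A j / n%:R * B i j
   + tot A / n%:R ^+ 2 * rs B i)).
  apply: eq_bigr => i _; rewrite [rs B i]/rs !mulr_sumr -!sumrB -big_split; apply: eq_bigr => j _ /=.
  rewrite mxE; ring.
rewrite big_split sumrB sumrB /= [X in _ - _ - X + _ = _]exchange_big /=.
rewrite [X in _ - X + _ = _](eq_bigr (fun j => rs A j / n%:R * rs B j)); last first.
  by move=> j _; rewrite -mulr_sumr cs_rs.
rewrite -[\sum_(i < n) tot A / n%:R ^+ 2 * rs B i]mulr_sumr -/(tot B).
have e : \sum_i rs A i / n%:R * rs B i = 1 / n%:R * \sum_i rs A i * rs B i.
  by rewrite mulr_sumr; apply: eq_bigr => i _; ring.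
rewrite e; by field.
Qed.
Lemma H_Ap {R : realType} n (A B : 'M[R]_n) : (n%:R : R) != 0 ->
  \sum_i Ap A i i * Ap B i i =
  \sum_i A i i * B i i - 2 / n%:R * (\sum_i A i i * rs B i + \sum_i B i i * rs A i)
  + (tot B * \sum_i A i i + tot A * \sum_i B i i) / n%:R ^+ 2
  + 4 / n%:R ^+ 2 * \sum_i rs A i * rs B i - 3 * tot A * tot B / n%:R ^+ 3.
Proof.
move=> n0.
transitivity (\sum_i (A i i * B i i + (-2 / n%:R) * (A i i * rs B i) + (-2 / n%:R) * (B i i * rs A i)
  + (tot B / n%:R ^+ 2) * A i i + (tot A / n%:R ^+ 2) * B i i + (4 / n%:R ^+ 2) * (rs A i * rs B i)
  + (-2 * tot B / n%:R ^+ 3) * rs A i + (-2 * tot A / n%:R ^+ 3) * rs B i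
  + (tot A * tot B / n%:R ^+ 4) * 1)).
  by apply: eq_bigr => i _; rewrite !mxE; field.
rewrite !big_split /= -!mulr_sumr sum_ones -/(tot A) -/(tot B); by field.
Qed.
Lemma E2poly {R : realType} n (i j : 'I_n) : (2 <= n)%N ->
  E2 i j = - 1 / (n%:R - 1) + n%:R / (n%:R - 1) * dd i j :> R.
Proof.
move=> n2; have n1 := nR1 (R:=R) n2; rewrite /dd.
case: (eqVneq i j) => [e|ij]; first by subst j; rewrite E2ii //=; field.
by rewrite E2ij //=; field.
Qed.
Lemma EqAp {R : realType} n (A : 'M[R]_n) : (2 <= n)%N ->
  Eperm (fun p => qform (Ap A) (svec p)) = n%:R / (n%:R - 1) * \sum_i Ap A i i.
Proof.
move=> n2; have n0 := n_neq0 (R:=R) n2.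
rewrite Eqform mulr_sumr; apply: eq_bigr => i _.
transitivity (- 1 / (n%:R - 1) * \sum_j Ap A i j + n%:R / (n%:R - 1) * \sum_j dd i j * Ap A i j).
  rewrite !mulr_sumr -big_split; apply: eq_bigr => j _ /=; rewrite E2poly //; ring.
by rewrite Ap_rs // mulr0 add0r sum_dd.
Qed.
Lemma xv_svec {R : realType} n (p : 'S_n) : \sum_i (svec p : 'cV[R]_n) i 0 = 0.
Proof. exact: (sum_xv1 p). Qed.
Lemma Cov_formula {R : realType} n (A B : 'M[R]_n) : (2 <= n)%N ->
  (forall i j, A i j = A j i) -> (forall i j, B i j = B j i) ->
  Covperm (fun p => qform A (svec p)) (fun p => qform B (svec p)) =
  u22 n * ((\sum_i Ap A i i) * (\sum_i Ap B i i) + 2 * \sum_i \sum_j Ap A i j * Ap B i j)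
  + u4 n * \sum_i Ap A i i * Ap B i i
  - (n%:R / (n%:R - 1)) ^+ 2 * (\sum_i Ap A i i) * (\sum_i Ap B i i).
Proof.
move=> n2 sA sB; have n0 := n_neq0 (R:=R) n2.
rewrite /Covperm.
rewrite (Eperm_ext (g := fun p => qform (Ap A) (svec p) * qform (Ap B) (svec p))); last first.
  by move=> p; rewrite !qform_Ap // xv_svec.
rewrite (Eperm_ext (f := fun p => qform A (svec p)) (g := fun p => qform (Ap A) (svec p))); last first.
  by move=> p; rewrite !qform_Ap // xv_svec.
rewrite (Eperm_ext (f := fun p => qform B (svec p)) (g := fun p => qform (Ap B) (svec p))); last first.
  by move=> p; rewrite !qform_Ap // xv_svec.
rewrite Eqform2 contraction //.
- rewrite !EqAp //; ring.
- by move=> i; apply: Ap_rs.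
- by move=> j; apply: Ap_cs.
- by move=> i; apply: Ap_rs.
- by move=> j; apply: Ap_cs.
- exact: Ap_sym.
Qed.
Lemma nge4 {R : realType} n : (4 <= n)%N -> (4 : R) <= n%:R.
Proof. by move=> h; rewrite ler_nat. Qed.
Lemma u22_closed {R : realType} n : (4 <= n)%N ->
  u22 n = 1 + (6 * n%:R + 5) / (5 * (n%:R ^+ 2 - 1)) :> R.
Proof.
move=> n4; have h := nge4 (R:=R) n4.
have h1 : (n%:R - 1 : R) != 0 by apply/eqP => e; lra.
have h2 : (n%:R - 2 : R) != 0 by apply/eqP => e; lra.
have h3 : (n%:R - 3 : R) != 0 by apply/eqP => e; lra.
have h4 : (n%:R ^+ 2 - 1 : R) != 0 by apply/eqP => e; nra.
have h5 : (n%:R + 1 : R) != 0 by apply/eqP => e; lra.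
rewrite /u22 /M1111 /M211 /M22 /M31 /M4; field.
by rewrite h1 h2 h3 h4 /=.
Qed.
Lemma u4_closed {R : realType} n : (4 <= n)%N ->
  u4 n = - 6 / 5 - 6 * (2 * n%:R - 1) / (5 * (n%:R - 1) ^+ 2) :> R.
Proof.
move=> n4; have h := nge4 (R:=R) n4.
have h1 : (n%:R - 1 : R) != 0 by apply/eqP => e; lra.
have h2 : (n%:R - 2 : R) != 0 by apply/eqP => e; lra.
have h3 : (n%:R - 3 : R) != 0 by apply/eqP => e; lra.
have h4 : (n%:R ^+ 2 - 1 : R) != 0 by apply/eqP => e; nra.
rewrite /u4 /u0 /u2 /u3 /u22 /M1111 /M211 /M22 /M31 /M4; field.
by rewrite h1 h2 h3 h4 /=.
Qed.
Lemma frac_bound {R : realType} (P Q K M : R) : 0 < Q -> 0 < M -> `|P| * M <= K * Q ->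
  `|P / Q| <= K / M.
Proof.
move=> Q0 M0 h; rewrite normrM normfV (gtr0_norm Q0) ler_pdivlMr // mulrAC ler_pdivrMr //.
Qed.
Lemma e1_bound {R : realType} n : (4 <= n)%N ->
  `|u22 n - (n%:R / (n%:R - 1)) ^+ 2 + 4 / (5 * n%:R)| <= 6 / n%:R ^+ 2 :> R.
Proof.
move=> n4; have h := nge4 (R:=R) n4; rewrite u22_closed //.
have h1 : (n%:R - 1 : R) != 0 by apply/eqP => e; lra.
have h0 : (n%:R : R) != 0 by apply/eqP => e; lra.
have h4 : (n%:R ^+ 2 - 1 : R) != 0 by apply/eqP => e; nra.
have -> : 1 + (6 * n%:R + 5) / (5 * (n%:R ^+ 2 - 1)) - (n%:R / (n%:R - 1)) ^+ 2 + 4 / (5 * n%:R)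
   = (4 - 4 * n%:R - 10 * n%:R ^+ 2) / (5 * n%:R * (n%:R ^+ 2 - 1) * (n%:R - 1)) :> R.
  by field; rewrite h1 h0 h4.
apply: frac_bound; [nra | nra |].
rewrite ler0_norm; last by nra.
nra.
Qed.
Lemma e2_bound {R : realType} n : (4 <= n)%N -> `|u22 n - 1| <= 2 / n%:R :> R.
Proof.
move=> n4; have h := nge4 (R:=R) n4; rewrite u22_closed // addrC addKr.
apply: frac_bound; [nra | lra |].
rewrite ger0_norm; last by nra.
nra.
Qed.
Lemma e3_bound {R : realType} n : (4 <= n)%N -> `|u4 n + 6 / 5| <= 5 / n%:R :> R.
Proof.
move=> n4; have h := nge4 (R:=R) n4; rewrite u4_closed //.
have -> : - 6 / 5 - 6 * (2 * n%:R - 1) / (5 * (n%:R - 1) ^+ 2) + 6 / 5 =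
   (- 6 * (2 * n%:R - 1)) / (5 * (n%:R - 1) ^+ 2) :> R by ring.
apply: frac_bound; [nra | lra |].
rewrite ler0_norm; last by nra.
nra.
Qed.
Lemma mul2_bound {R : realType} (x y X Y : R) : `|x| <= X -> `|y| <= Y -> `|x * y| <= X * Y.
Proof. by move=> hx hy; rewrite normrM ler_pM ?normr_ge0. Qed.
Lemma mul3_bound {R : realType} (x y z X Y Z : R) : `|x| <= X -> `|y| <= Y -> `|z| <= Z ->
  `|x * y * z| <= X * Y * Z.
Proof. by move=> hx hy hz; apply: mul2_bound => //; apply: mul2_bound. Qed.
Lemma absP {R : realType} (x X : R) : `|x| <= X -> - X <= x /\ x <= X.
Proof. by rewrite ler_norml => /andP. Qed.
Lemma absI {R : realType} (x X : R) : - X <= x -> x <= X -> `|x| <= X.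
Proof. by move=> h1 h2; rewrite ler_norml h1 h2. Qed.
Lemma div_bound {R : realType} (x X N : R) : 0 < N -> `|x| <= N * X -> `|x / N| <= X.
Proof.
move=> N0 h; rewrite normrM normfV (gtr0_norm N0) ler_pdivrMr // mulrC //.
Qed.

Lemma big_case {R : realType} n (A B : 'M[R]_n) : (4 <= n)%N ->
  (forall i j, A i j = A j i) -> (forall i j, B i j = B j i) ->
  `| Covperm (fun p => qform A (svec p)) (fun p => qform B (svec p))
     - (2 * \sum_i \sum_j A i j * B i j - 6 / 5 * \sum_i A i i * B i i
        - 4 / (5 * n%:R) * (\sum_i A i i) * (\sum_i B i i)) |
   <= 100 * specnorm A * specnorm B.
Proof.
move=> n4 sA sB; have n2 : (2 <= n)%N by apply: leq_trans n4.
have hN := nge4 (R:=R) n4; have n0 : (n%:R : R) != 0 by apply/eqP => e; lra.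
have N0 : (0 : R) < n%:R by lra.
rewrite Cov_formula //.
set a := specnorm A; set b := specnorm B; set N := (n%:R : R).
have a0 : 0 <= a := specnorm_ge0 A; have b0 : 0 <= b := specnorm_ge0 B.
have ab0 : 0 <= a * b by apply: mulr_ge0.
set tA := \sum_i Ap A i i; set tB := \sum_i Ap B i i.
set xx := \sum_i \sum_j Ap A i j * Ap B i j; set hh := \sum_i Ap A i i * Ap B i i.
set TA := \sum_i A i i; set TB := \sum_i B i i.
set X := \sum_i \sum_j A i j * B i j; set H := \sum_i A i i * B i i.
pose e1 := u22 n - (N / (N - 1)) ^+ 2 + 4 / (5 * N).
pose e2 : R := u22 n - 1; pose e3 : R := u4 n + 6 / 5.
have -> : u22 n * (tA * tB + 2 * xx) + u4 n * hh - (N / (N - 1)) ^+ 2 * tA * tB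
    - (2 * X - 6 / 5 * H - 4 / (5 * N) * TA * TB) =
    e1 * tA * tB + 2 * e2 * xx + e3 * hh + 2 * (xx - X) - 6 / 5 * (hh - H)
    - 4 / (5 * N) * (tA * tB - TA * TB).
  by rewrite /e1 /e2 /e3; ring.
have bTA : `|TA| <= N * a := bnd_tr A.
have bTB : `|TB| <= N * b := bnd_tr B.
have bX : `|X| <= N * (a * b) := bnd_X A B.
have bH : `|H| <= N * (a * b) := bnd_H A B.
have N1 : 1 <= N by lra.
have aN : a <= N * a by rewrite -[X in X <= _]mul1r ler_wpM2r.
have bN : b <= N * b by rewrite -[X in X <= _]mul1r ler_wpM2r.
have abn : a * b <= N * (a * b) by rewrite -[X in X <= _]mul1r ler_wpM2r.
pose ta := tot A / N; pose tb := tot B / N.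
have bta : `|ta| <= a by apply: div_bound => //; exact: bnd_tot.
have btb : `|tb| <= b by apply: div_bound => //; exact: bnd_tot.
pose sN := (\sum_i rs A i * rs B i) / N.
have bsN : `|sN| <= a * b by apply: div_bound => //; exact: bnd_rsrs.
pose sNN := sN / N.
have bsNN : `|sNN| <= a * b by apply: div_bound => //; lra.
pose d1 := (\sum_i A i i * rs B i) / N; pose d2 := (\sum_i B i i * rs A i) / N.
have bd1 : `|d1| <= a * b by apply: div_bound => //; exact: bnd_drs.
have bd2 : `|d2| <= a * b by apply: div_bound => //; rewrite (mulrC a b); exact: bnd_drs.
pose TAN := TA / N; pose TBN := TB / N.
have bTAN : `|TAN| <= a by apply: div_bound.
have bTBN : `|TBN| <= b by apply: div_bound.
have bp := mul2_bound bta btb.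
pose q := ta * tb / N.
have bq : `|q| <= a * b by apply: div_bound => //; lra.
have b1 := mul2_bound btb bTAN; have b2 := mul2_bound bta bTBN.
have etA : tA = TA - ta by rewrite /tA tr_Ap.
have etB : tB = TB - tb by rewrite /tB tr_Ap.
have exx : xx - X = - 2 * sN + ta * tb.
  rewrite /xx X_Ap // /sN /ta /tb -/X; field.
  exact: n0.
have ehh : hh - H = - 2 * (d1 + d2) + tb * TAN + ta * TBN + 4 * sNN - 3 * q.
  rewrite /hh H_Ap // /d1 /d2 /sNN /sN /q /ta /tb /TAN /TBN -/H -/TA -/TB; field.
  exact: n0.
have bxx : `|xx - X| <= 3 * (a * b).
  move: (absP bsN) (absP bp) => [? ?] [? ?]; apply: absI; lra.
have bhh : `|hh - H| <= 13 * (a * b).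
  move: (absP bd1) (absP bd2) (absP b1) (absP b2) (absP bsNN) (absP bq) => [? ?] [? ?] [? ?] [? ?] [? ?] [? ?].
  apply: absI; lra.
have bxx2 : `|xx| <= N * (a * b) + 3 * (a * b).
  move: (absP bxx) (absP bX) => [? ?] [? ?]; apply: absI; lra.
have bhh2 : `|hh| <= N * (a * b) + 13 * (a * b).
  move: (absP bhh) (absP bH) => [? ?] [? ?]; apply: absI; lra.
have btA : `|tA| <= 2 * (N * a).
  move: (absP bTA) (absP bta) => [? ?] [? ?]; apply: absI; rewrite etA; lra.
have btB : `|tB| <= 2 * (N * b).
  move: (absP bTB) (absP btb) => [? ?] [? ?]; apply: absI; rewrite etB; lra.
have btt : `|tA * tB - TA * TB| <= 3 * (N * (a * b)).
  have c1 := mul2_bound bTA btb; have c2 := mul2_bound bta bTB.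
  move: (absP c1) (absP c2) (absP bp) => [? ?] [? ?] [? ?].
  apply: absI; rewrite etA etB; lra.
pose w := a * b / N.
have abN0 : 0 <= w by apply: divr_ge0 => //; lra.
have abN4 : 4 * w <= a * b.
  have e : w * N = a * b by rewrite /w mulfVK.
  nra.
have t1 : `|e1 * tA * tB| <= 24 * (a * b).
  apply: le_trans (mul3_bound (e1_bound n4) btA btB) _.
  rewrite le_eqVlt; apply/orP; left; apply/eqP; rewrite -/N; field; exact: n0.
have t2 : `|2 * e2 * xx| <= 4 * (a * b) + 12 * w.
  have h2 : `|2 : R| <= 2 by rewrite ger0_norm.
  apply: le_trans (mul3_bound h2 (e2_bound n4) bxx2) _.
  rewrite le_eqVlt; apply/orP; left; apply/eqP; rewrite -/N /w; field; exact: n0.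
have t3 : `|e3 * hh| <= 5 * (a * b) + 65 * w.
  apply: le_trans (mul2_bound (e3_bound n4) bhh2) _.
  rewrite le_eqVlt; apply/orP; left; apply/eqP; rewrite -/N /w; field; exact: n0.
have t6 : `|4 / (5 * N) * (tA * tB - TA * TB)| <= 12 / 5 * (a * b).
  have h6 : `|4 / (5 * N)| <= 4 / (5 * N) by rewrite ger0_norm // divr_ge0 //; lra.
  apply: le_trans (mul2_bound h6 btt) _.
  rewrite le_eqVlt; apply/orP; left; apply/eqP; field; exact: n0.
move: (absP t1) (absP t2) (absP t3) (absP t6) (absP bxx) (absP bhh) => [? ?] [? ?] [? ?] [? ?] [? ?] [? ?].
apply: absI; lra.
Qed.
Lemma qform_bil {R : realType} n (A : 'M[R]_n) (x : 'cV[R]_n) :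
  qform A x = \sum_i x i 0 * (A *m x) i 0.
Proof. by rewrite /qform -mulmxA mxE; apply: eq_bigr => i _; rewrite mxE. Qed.
Lemma qform_bound {R : realType} n (A : 'M[R]_n) (p : 'S_n) : (2 <= n)%N ->
  `|qform A (svec p)| <= n%:R * specnorm A.
Proof.
move=> n2; rewrite qform_bil; apply: le_trans (bil _ _ _) _.
rewrite mulrCA -expr2 vn_sq.
by rewrite (eq_bigr (fun i => xv p i ^+ 2)) // sum_xv2 // mulrC.
Qed.
Lemma Eperm_bound {R : realType} n (f : 'S_n -> R) K : (forall p, `|f p| <= K) -> `|Eperm f| <= K.
Proof.
move=> h; rewrite /Eperm normrM.
have f0 : (0 : R) < n`!%:R by rewrite ltr0n fact_gt0.
rewrite ger0_norm ?invr_ge0 ?ler0n // mulrC ler_pdivrMr //.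
apply: le_trans (ler_norm_sum _ _ _) _.
apply: le_trans (ler_sum _ (fun p _ => h p)) _.
by rewrite sumr_const card_Sn mulr_natr.
Qed.
Lemma small_case {R : realType} n (A B : 'M[R]_n) : (2 <= n)%N -> (n < 4)%N ->
  (forall i j, A i j = A j i) -> (forall i j, B i j = B j i) ->
  `| Covperm (fun p => qform A (svec p)) (fun p => qform B (svec p))
     - (2 * \sum_i \sum_j A i j * B i j - 6 / 5 * \sum_i A i i * B i i
        - 4 / (5 * n%:R) * (\sum_i A i i) * (\sum_i B i i)) |
   <= 100 * specnorm A * specnorm B.
Proof.
move=> n2 n4 sA sB.
have hN : (2 : R) <= n%:R by rewrite ler_nat.
have hN3 : (n%:R : R) <= 3 by rewrite (_ : (3 : R) = 3%:R) // ler_nat -ltnS.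
set a := specnorm A; set b := specnorm B; set N := (n%:R : R).
have a0 : 0 <= a := specnorm_ge0 A; have b0 : 0 <= b := specnorm_ge0 B.
have ab0 : 0 <= a * b by apply: mulr_ge0.
have qa := qform_bound A _ n2; have qb := qform_bound B _ n2.
have e1 : `|Eperm (fun p => qform A (svec p) * qform B (svec p))| <= N * a * (N * b).
  by apply: Eperm_bound => p; apply: mul2_bound.
have e2 : `|Eperm (fun p => qform A (svec p)) * Eperm (fun p => qform B (svec p))| <= N * a * (N * b).
  by apply: mul2_bound; apply: Eperm_bound.
have bX : `|\sum_i \sum_j A i j * B i j| <= N * (a * b) := bnd_X A B.
have bH : `|\sum_i A i i * B i i| <= N * (a * b) := bnd_H A B.
have bt : `|4 / (5 * N) * (\sum_i A i i) * (\sum_i B i i)| <= 4 / (5 * N) * (N * a) * (N * b).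
  apply: mul3_bound; [by rewrite ger0_norm // divr_ge0 //; lra | exact: bnd_tr | exact: bnd_tr].
have eq4 : 4 / (5 * N) * (N * a) * (N * b) = 4 / 5 * (N * (a * b)).
  by field; apply/eqP => e; lra.
rewrite eq4 in bt.
rewrite /Covperm.
have N2 : N * a * (N * b) = (N * N) * (a * b) by ring.
rewrite N2 in e1 e2.
have NN : N * N * (a * b) <= 9 * (a * b) by apply: ler_wpM2r => //; nra.
have N3 : N * (a * b) <= 3 * (a * b) by apply: ler_wpM2r.
move: (absP e1) (absP e2) (absP bX) (absP bH) (absP bt) => [? ?] [? ?] [? ?] [? ?] [? ?].
apply: absI; lra.
Qed.
Unset Implicit Arguments.
Theorem lemma5 (R : realType) :
  (forall (n : nat), (2 <= n)%N -> forall A : 'M[R]_n, A^T = A ->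
     Eperm (fun p => qform A (svec p)) = \tr (Sigma R n *m A)) /\
  (exists C : R, forall (n : nat), (2 <= n)%N ->
     forall A B : 'M[R]_n, A^T = A -> B^T = B ->
     `| Covperm (fun p => qform A (svec p)) (fun p => qform B (svec p))
        - (2 * \tr (A *m B) - 6 / 5 * \tr (hadamard A B)
           - 4 / (5 * n%:R) * \tr A * \tr B) |
       <= C * specnorm A * specnorm B).
Proof.
split; first by move=> n n2 A sA; apply: part1.
exists 100 => n n2 A B sA sB.
have sA' := sym_entry sA; have sB' := sym_entry sB.
have -> : \tr (A *m B) = \sum_i \sum_j A i j * B i j.
  by apply: eq_bigr => i _; rewrite mxE; apply: eq_bigr => j _; rewrite sB'.
have -> : \tr (hadamard A B) = \sum_i A i i * B i i.
  by apply: eq_bigr => i _; rewrite mxE.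
case: (leqP 4 n) => [n4|n3].
  exact: big_case.
exact: small_case.
Qed.
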